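(* Let $p>r\geq2$ and let $A$ be a symmetric nonnegative $r$-matrix. If $A_1,\ldots,A_k$ are the nonzero components of $A$, then \[ \lambda^{(p)}(A)=\Big(\sum_{i\in[k]}\big(\lambda^{(p)}(A_i)\big)^{p/(p-r)}\Big)^{(p-r)/p}. \]
   Context: A cubical $r$-matrix of order $n$ is a function $A$ on $[n]^r$ with entries $a_{i_1,\ldots,i_r}$; symmetric means invariant under permutations of indices. For a cubical matrix $B$ of order $m$, $P_B(\mathbf{x})=\sum b_{i_1,\ldots,i_r}x_{i_1}\cdots x_{i_r}$ and $\lambda^{(p)}(B)=\max\{P_B(\mathbf{x}):\mathbf{x}\in\mathbb{R}^m,\ \sum|x_i|^p=1\}$. For $X\subset[n]$, $A[X]$ is the restriction of $A$ to $X^r$ (principal submatrix). The graph of symmetric $A$ has vertex set $[n]$ with $k,j$ adjacent whenever some nonzero entry $a_{k,i_2,\ldots,i_r}$ has $j\in\{i_2,\ldots,i_r\}$; the components of $A$ are the principal submatrices $A[X]$ where $X$ ranges over the vertex sets of the connected components of this graph. *)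

(* Defs.v *)
From HB Require Import structures.
From mathcomp Require Import all_boot all_order all_algebra all_fingroup.
From mathcomp Require Import all_classical all_reals all_analysis.
Set Implicit Arguments. Unset Strict Implicit. Unset Printing Implicit Defensive.
Import Order.TTheory GRing.Theory Num.Theory.
Local Open Scope ring_scope.
Local Open Scope classical_set_scope.

Definition cmatrix (R : Type) (r n : nat) := r.-tuple 'I_n -> R.

Section CubicalMatrices.
Variables (R : realType) (r : nat).

Definition csym n (A : cmatrix R r n) : Prop :=
  forall (t : r.-tuple 'I_n) (s : 'S_r),
    A [tuple tnth t (s j) | j < r] = A t.

Definition cnonneg n (A : cmatrix R r n) : Prop := forall t, 0 <= A t.

Definition Pform n (A : cmatrix R r n) (x : 'I_n -> R) : R :=
  \sum_(t : r.-tuple 'I_n) A t * \prod_(j < r) x (tnth t j).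

(* lambda^(p)(A) = max { P_A(x) : sum |x_i|^p = 1 }  (taken as the supremum) *)
Definition lambdap (p : R) n (A : cmatrix R r n) : R :=
  sup [set Pform A x | x in [set x : 'I_n -> R | \sum_(i < n) `|x i| `^ p = 1]].

Definition psub n (A : cmatrix R r n) (X : {set 'I_n}) : cmatrix R r #|X| :=
  fun t => A [tuple enum_val (tnth t j) | j < r].

Definition cadj n (A : cmatrix R r n) (k j : 'I_n) : bool :=
  [exists t : r.-tuple 'I_n,
     (A t != 0) &&
     (match val t with k' :: s => (k' == k) && (j \in s) | [::] => false end)].

Definition ccomps n (A : cmatrix R r n) : {set {set 'I_n}} :=
  ((fun i => finset (connect (fun a b => cadj A a b || cadj A b a) i)) @: [set: 'I_n])%SET.

Definition cnonzero n (A : cmatrix R r n) : bool := [exists t, A t != 0].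

End CubicalMatrices.
Arguments psub {R r n} A X _.

(* Main.v *)
Require Import Defs.
From HB Require Import structures.
From mathcomp Require Import all_boot all_order all_algebra all_fingroup.
From mathcomp Require Import all_classical all_reals all_analysis.
From mathcomp Require Import ring lra.
Import Order.TTheory GRing.Theory Num.Theory.
Set Implicit Arguments. Unset Strict Implicit. Unset Printing Implicit Defensive.
Local Open Scope ring_scope.
Local Open Scope classical_set_scope.

Definition sphn (R : realType) (p : R) m (x : 'I_m -> R) :=
  \sum_(i < m) `|x i| `^ p = 1.

Lemma powR1' (R : realType) (p : R) : 1 `^ p = 1.
Proof. by rewrite powR1. Qed.

Lemma norm_le1 (R : realType) (p : R) m (x : 'I_m -> R) :
  0 < p -> sphn p x -> forall i, `|x i| <= 1.
Proof.
move=> p0 Hx i.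
have H : `|x i| `^ p <= 1.
  rewrite -Hx (bigD1 i) //= lerDl sumr_ge0 // => j _; exact: powR_ge0.
rewrite leNgt; apply/negP => Hlt.
have := gt0_ltr_powR p0 _ _ Hlt; rewrite powR1' !nnegrE => /(_ ler01 (ltW (lt_le_trans ltr01 (ltW Hlt)))).
by rewrite ltNge H.
Qed.

Lemma Pform_bound (R : realType) r (p : R) m (B : cmatrix R r m) (x : 'I_m -> R) :
  0 < p -> sphn p x -> Pform B x <= \sum_t `|B t|.
Proof.
move=> p0 Hx; rewrite /Pform; apply: ler_sum => t _.
apply: le_trans (ler_norm _) _; rewrite normrM normr_prod.
apply: ler_piMr => //; apply: prodr_ile1 => j _.
by rewrite normr_ge0 (norm_le1 p0 Hx).
Qed.

Lemma has_sup_P (R : realType) r (p : R) m (B : cmatrix R r m) (x : 'I_m -> R) :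
  0 < p -> sphn p x ->
  has_sup [set Pform B x | x in [set x : 'I_m -> R | \sum_(i < m) `|x i| `^ p = 1]].
Proof.
move=> p0 Hx; split; first by exists (Pform B x), x.
exists (\sum_t `|B t|) => z [y Hy <-]. exact: (Pform_bound B p0 Hy).
Qed.

Lemma lam_ge (R : realType) r (p : R) m (B : cmatrix R r m) (x : 'I_m -> R) :
  0 < p -> sphn p x -> Pform B x <= lambdap p B.
Proof.
move=> p0 Hx; apply: sup_upper_bound; first exact: (has_sup_P B p0 Hx).
by exists x.
Qed.

Lemma Pform_ge0 (R : realType) r m (B : cmatrix R r m) (x : 'I_m -> R) :
  cnonneg B -> (forall i, 0 <= x i) -> 0 <= Pform B x.
Proof.
move=> HB Hx; apply: sumr_ge0 => t _; apply: mulr_ge0 => //.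
by apply: prodr_ge0 => j _.
Qed.

Lemma lam_ge0 (R : realType) r (p : R) m (B : cmatrix R r m) :
  0 < p -> cnonneg B -> 0 <= lambdap p B.
Proof.
move=> p0 HB; rewrite /lambdap.
have [[x Hx]|Hn] := pselect (exists x : 'I_m -> R, sphn p x).
  have Hy : sphn p (fun i => `|x i|).
    by rewrite /sphn; under eq_bigr do rewrite normr_id.
  apply: le_trans (lam_ge B p0 Hy); exact: Pform_ge0.
suff -> : [set Pform B x | x in [set x : 'I_m -> R | \sum_(i < m) `|x i| `^ p = 1]] = set0.
  by rewrite sup0.
apply/seteqP; split => [z [x Hx _]|//]; exfalso; apply: Hn; by exists x.
Qed.

Lemma Pform_scale (R : realType) r m (B : cmatrix R r m) (c : R) y :
  Pform B (fun i => c * y i) = c ^+ r * Pform B y.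
Proof.
rewrite /Pform mulr_sumr; apply: eq_bigr => t _.
by rewrite big_split /= prodr_const card_ord mulrCA.
Qed.

Lemma sph_scale (R : realType) (p : R) m (c : R) (y : 'I_m -> R) :
  0 <= c -> \sum_i `|c * y i| `^ p = c `^ p * \sum_i `|y i| `^ p.
Proof.
move=> c0; rewrite mulr_sumr; apply: eq_bigr => i _.
by rewrite normrM ger0_norm // powRM.
Qed.

Lemma homog (R : realType) r (p : R) m (B : cmatrix R r m) (y : 'I_m -> R) :
  0 < p -> (0 < r)%N ->
  Pform B y <= lambdap p B * (\sum_i `|y i| `^ p) `^ (r%:R / p).
Proof.
move=> p0 r0; set u := \sum_i _.
have u0 : 0 <= u by apply: sumr_ge0 => i _; exact: powR_ge0.
have [ueq|upos] := eqVneq u 0.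
  have yz : forall i, y i = 0.
    move=> i; have := psumr_eq0P (fun j _ => powR_ge0 `|y j| p) ueq (i:=i) isT.
    by move/powR_eq0_eq0/normr0_eq0.
  have -> : Pform B y = 0.
    rewrite /Pform big1 // => t _.
    rewrite (bigD1 (Ordinal r0)) //= yz mul0r mulr0 //.
  by rewrite ueq powR0 ?mulr0 // mulf_neq0 // ?pnatr_eq0 -?lt0n ?invr_eq0 ?gt_eqF.
have upos' : 0 < u by rewrite lt_def upos u0.
pose c := u `^ (- p^-1).
have c0 : 0 <= c by exact: powR_ge0.
have Hz : sphn p (fun i => c * y i).
  rewrite /sphn sph_scale // -/u /c -powRrM mulNr mulVf ?gt_eqF //.
  by rewrite powR_inv1 // mulVf ?gt_eqF.
have := lam_ge B p0 Hz; rewrite Pform_scale /c -powR_mulrn // -powRrM.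
move=> H.
have -> : Pform B y = u `^ (r%:R / p) * (u `^ (- p^-1 * r%:R) * Pform B y).
have Hd : ((r%:R / p) + (- p^-1 * r%:R) == 0) ==> (u != 0) by rewrite upos implybT.
  rewrite mulrA -powRD //.
  by rewrite mulNr mulrC [p^-1 * _]mulrC addrN powRr0 mulr1.
rewrite mulrC; apply: ler_wpM2r => //; exact: powR_ge0.
Qed.

Definition crel (R : realType) r n (A : cmatrix R r n) : rel 'I_n :=
  fun a b => cadj A a b || cadj A b a.
Definition comp (R : realType) r n (A : cmatrix R r n) (i : 'I_n) : {set 'I_n} :=
  finset (connect (crel A) i).

Lemma ccompsE (R : realType) r n (A : cmatrix R r n) :
  ccomps A = ((comp A) @: [set: 'I_n])%SET.
Proof. by []. Qed.

Lemma comp_self (R : realType) r n (A : cmatrix R r n) i : i \in comp A i.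
Proof. by rewrite inE connect0. Qed.

Lemma comp_in (R : realType) r n (A : cmatrix R r n) i : comp A i \in ccomps A.
Proof. by rewrite ccompsE; apply: imset_f; rewrite inE. Qed.

Lemma comp_eq (R : realType) r n (A : cmatrix R r n) i j :
  j \in comp A i -> comp A j = comp A i.
Proof.
have hs : connect_sym (crel A).
  by apply: sym_connect_sym => a b; rewrite /crel orbC.
rewrite inE => hij; apply/setP => k; rewrite !inE.
apply/idP/idP => h.
  exact: connect_trans hij h.
by apply: connect_trans _ h; rewrite hs.
Qed.

Lemma comps_uniq (R : realType) r n (A : cmatrix R r n) X i :
  X \in ccomps A -> i \in X -> X = comp A i.
Proof.
rewrite ccompsE => /imsetP [k _ ->] hi.
by rewrite (comp_eq hi).
Qed.

Lemma edge_comp (R : realType) r n (A : cmatrix R r n) (t : r.-tuple 'I_n)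
  (r0 : (0 < r)%N) :
  A t != 0 -> forall j, tnth t j \in comp A (tnth t (Ordinal r0)).
Proof.
move=> HA j.
case Ht: (val t) => [|k s].
  have : (0 < size (val t))%N by rewrite size_tuple.
  by rewrite Ht.
have -> : tnth t (Ordinal r0) = k by rewrite (tnth_nth k) /= Ht.
have hm : tnth t j \in val t := mem_tnth j t.
move: hm; rewrite Ht in_cons.
case/orP => [/eqP ->|hs]; first exact: comp_self.
rewrite inE; apply: connect1; apply/orP; left.
by apply/existsP; exists t; rewrite HA Ht eqxx hs.
Qed.

Lemma split_sum (R : realType) n (T : finType) (S : {set {set 'I_n}})
  (Q : {set 'I_n} -> T -> bool) (F : T -> R) :
  (forall t, F t != 0 -> exists2 X, X \in S &
     Q X t /\ forall Y, Y \in S -> Q Y t -> Y = X) ->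
  \sum_t F t = \sum_(X in S) \sum_(t | Q X t) F t.
Proof.
move=> HU.
under [RHS]eq_bigr do rewrite big_mkcond.
rewrite exchange_big /=; apply: eq_bigr => t _.
have [Ft0|Ftn] := eqVneq (F t) 0.
  by rewrite Ft0 big1 // => X _; case: ifP.
have [X XS [QX U]] := HU t Ftn.
rewrite (bigD1 X) //= QX big1 ?addr0 // => Y /andP [YS YX].
case: ifP => // QY; move: YX; by rewrite (U Y YS QY) eqxx.
Qed.

Lemma tuple_reindex (R : realType) r n (X : {set 'I_n}) (G : r.-tuple 'I_n -> R) :
  (0 < r)%N ->
  \sum_(t | [forall j, tnth t j \in X]) G t =
  \sum_(t' : r.-tuple 'I_#|X|) G [tuple enum_val (tnth t' j) | j < r].
Proof.
move=> r0.
pose h (t' : r.-tuple 'I_#|X|) : r.-tuple 'I_n := [tuple enum_val (tnth t' j) | j < r].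
transitivity (\sum_(t' in [set: r.-tuple 'I_#|X|]%SET) G (h t')); last first.
  by apply: eq_bigl => t'; rewrite inE.
rewrite -(big_imset (h := h)); last first.
  move=> t1 t2 _ _ e; apply: eq_from_tnth => j.
  by have := congr1 (fun t => tnth t j) e; rewrite /h !tnth_mktuple => /enum_val_inj.
apply: eq_bigl => t; apply/forallP/imsetP.
  move=> Hall; have x0 := Hall (Ordinal r0).
  exists [tuple enum_rank_in x0 (tnth t j) | j < r]; first by rewrite inE.
  by apply: eq_from_tnth => j; rewrite /h !tnth_mktuple enum_rankK_in.
by case=> t' _ -> j; rewrite /h tnth_mktuple; exact: enum_valP.
Qed.

Lemma Pform_dec (R : realType) r n (A : cmatrix R r n) (x : 'I_n -> R) :
  (0 < r)%N ->
  Pform A x = \sum_(X in ccomps A) Pform (psub A X) (fun k => x (enum_val k)).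
Proof.
move=> r0; rewrite /Pform (@split_sum _ _ _ (ccomps A) (fun X t => [forall j, tnth t j \in X])).
  apply: eq_bigr => X _; rewrite tuple_reindex //; apply: eq_bigr => t' _.
  by rewrite /psub; congr (_ * _); apply: eq_bigr => j _; rewrite tnth_mktuple.
move=> t Ft.
have HA : A t != 0 by apply: contraNneq Ft => ->; rewrite mul0r.
exists (comp A (tnth t (Ordinal r0))); first exact: comp_in.
split; first by apply/forallP => j; exact: edge_comp.
move=> Y HY /forallP HQ; exact: comps_uniq HY (HQ _).
Qed.

Lemma norm_dec (R : realType) r n (A : cmatrix R r n) (g : 'I_n -> R) :
  \sum_i g i = \sum_(X in ccomps A) \sum_(k < #|X|) g (enum_val k).
Proof.
rewrite (@split_sum _ _ _ (ccomps A) (fun X i => i \in X)).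
  by apply: eq_bigr => X _; rewrite big_enum_val.
move=> i _; exists (comp A i); first exact: comp_in.
split; first exact: comp_self.
move=> Y HY Hi; exact: comps_uniq HY Hi.
Qed.

Lemma term_alg (R : realType) (l T q s : R) :
  0 <= l -> 0 < T -> 0 < q -> q * s + 1 = q ->
  (l `^ q / T) `^ s * l = l `^ q / T `^ s.
Proof.
move=> l0 T0 q0 Hqs.
rewrite powRM ?powR_ge0 ?invr_ge0 ?ltW //.
rewrite -(powR_inv1 (ltW T0)) -!powRrM mulN1r powRN.
rewrite mulrAC -{2}(powRr1 l0) -powRD; first by rewrite Hqs.
by rewrite Hqs gt_eqF.
Qed.

Lemma young_sum (R : realType) (I : finType) (P : pred I) (a u : I -> R) (rr p : R) :
  0 < rr -> rr < p ->
  (forall i, 0 <= a i) -> (forall i, 0 <= u i) -> \sum_(i | P i) u i <= 1 ->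
  \sum_(i | P i) a i * u i `^ (rr / p) <=
  (\sum_(i | P i) a i `^ (p / (p - rr))) `^ ((p - rr) / p).
Proof.
move=> rr0 rrp a0 u0 Hu.
have p0 : 0 < p by exact: lt_trans rrp.
have prr : 0 < p - rr by rewrite subr_gt0.
set q := p / (p - rr); set e := (p - rr) / p; set s := rr / p.
have q0 : 0 < q by rewrite divr_gt0.
have e0 : 0 < e by rewrite divr_gt0.
have eq1 : e * q = 1.
  by rewrite /e /q; field; rewrite !gt_eqF.
set T := \sum_(i | P i) a i `^ q.
have T0 : 0 <= T by apply: sumr_ge0 => i _; exact: powR_ge0.
have [Teq|Tn] := eqVneq T 0.
  rewrite big1; first exact: powR_ge0.
  move=> i Pi; have := psumr_eq0P (fun j _ => powR_ge0 (a j) q) Teq Pi.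
  by move/powR_eq0_eq0 => ->; rewrite mul0r.
have Tpos : 0 < T by rewrite lt_def Tn T0.
set L := T `^ e.
have L0 : 0 < L by exact: powR_gt0.
have conj : q^-1 + (p / rr)^-1 = 1.
  rewrite /q !invf_div; field.
  by rewrite gt_eqF //; rewrite gt_eqF.
have key : forall i, a i * u i `^ s <=
    L * ((a i `^ q * T^-1) * q^-1 + u i * (p / rr)^-1).
  move=> i.
  have -> : a i * u i `^ s = L * ((a i / L) * u i `^ s).
    by rewrite mulrA mulrCA divff ?gt_eqF // mulr1.
  apply: ler_wpM2l; first exact: ltW.
  apply: le_trans (conjugate_powR _ _ q0 _ conj) _.
  - by rewrite divr_ge0 // ltW.
  - exact: powR_ge0.
  - by rewrite divr_gt0.
  have -> : (a i / L) `^ q = a i `^ q * T^-1.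
    rewrite (powRM _ (a0 i)) ?invr_ge0 ?(ltW L0) //; congr (_ * _).
    rewrite /L -powRN -powRrM mulNr eq1 -(powR_inv1 T0) //.
  have -> : (u i `^ s) `^ (p / rr) = u i.
    rewrite -powRrM (_ : s * (p / rr) = 1) ?powRr1 //.
    by rewrite /s; field; rewrite !gt_eqF.
  by [].
apply: le_trans (ler_sum _ (fun i Pi => key i)) _.
rewrite -mulr_sumr big_split /= -!mulr_suml -/T divff ?gt_eqF // mul1r.
rewrite -[leRHS]mulr1; apply: ler_wpM2l; first exact: ltW.
rewrite -conj lerD2l -[leRHS]mul1r; apply: ler_wpM2r => //.
by rewrite invr_ge0 ltW // divr_gt0.
Qed.


Lemma Pdec_nz (R : realType) r n (A : cmatrix R r n) (x : 'I_n -> R) :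
  (0 < r)%N ->
  Pform A x = \sum_(X in ccomps A | cnonzero (psub A X))
                 Pform (psub A X) (fun k => x (enum_val k)).
Proof.
move=> r0; rewrite Pform_dec // big_mkcondr /=; apply: eq_bigr => X _.
case: ifP => // /negbT /existsPn Hz.
rewrite /Pform big1 // => t _.
by have := Hz t; rewrite negbK => /eqP ->; rewrite mul0r.
Qed.

Lemma sph_e (R : realType) (p : R) m (j0 : 'I_m) :
  0 < p -> sphn p (fun j => (j == j0)%:R : R).
Proof.
move=> p0; rewrite /sphn (bigD1 j0) //= eqxx normr1 powR1' big1 ?addr0 //.
by move=> j /negbTE ->; rewrite normr0 powR0 // gt_eqF.
Qed.

Lemma approx (R : realType) r (p : R) n (A : cmatrix R r n) (eps : R) X :
  0 < p -> 0 < eps -> X \in ccomps A ->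
  exists2 z : 'I_n -> R, sphn p (fun k : 'I_#|X| => z (enum_val k)) &
     lambdap p (psub A X) - eps < Pform (psub A X) (fun k => z (enum_val k)).
Proof.
move=> p0 eps0 HX.
have [k _ Xk] := imsetP HX.
have Hk : k \in X by rewrite Xk comp_self.
have Hy0 := sph_e (enum_rank_in Hk k) p0.
have [e [y Hy <-] He] := sup_adherent eps0 (has_sup_P (psub A X) p0 Hy0).
exists (fun i => y (enum_rank_in Hk i)).
  by rewrite /sphn; under eq_bigr do rewrite enum_valK_in.
rewrite /lambdap.
have -> : (fun k0 => y (enum_rank_in Hk (enum_val k0))) = y.
  by apply/funext => k0; rewrite enum_valK_in.
exact: He.
Qed.

Theorem theorem11 (R : realType) (r n : nat) (p : R) (A : cmatrix R r n) :
  (2 <= r)%N -> r%:R < p -> csym A -> cnonneg A ->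
  lambdap p A =
  (\sum_(X in ccomps A | cnonzero (psub A X))
      (lambdap p (psub A X)) `^ (p / (p - r%:R))) `^ ((p - r%:R) / p).
Proof.
move=> r2 rp _ Hnn.
have r0 : (0 < r)%N by apply: leq_trans r2.
have rpos : 0 < r%:R :> R by rewrite ltr0n.
have p0 : 0 < p by exact: lt_trans rp.
have prr : 0 < p - r%:R by rewrite subr_gt0.
have Hnn' : forall X, cnonneg (psub A X) by move=> X t; exact: Hnn.
set q := p / (p - r%:R); set e := (p - r%:R) / p; set s := r%:R / p.
have q0 : 0 < q by rewrite divr_gt0.
have e0 : 0 < e by rewrite divr_gt0.
set T := \sum_(X in ccomps A | cnonzero (psub A X)) _.
have T0 : 0 <= T by apply: sumr_ge0 => X _; exact: powR_ge0.
apply/eqP; rewrite eq_le; apply/andP; split.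
-
  rewrite /lambdap.
  have [[x0 Hx0]|Hn] := pselect (exists x : 'I_n -> R, sphn p x); last first.
    suff -> : [set Pform A x | x in [set x : 'I_n -> R | \sum_(i < n) `|x i| `^ p = 1]] = set0.
      by rewrite sup0 powR_ge0.
    apply/seteqP; split => [z [x Hx _]|//]; exfalso; apply: Hn; by exists x.
  apply: ge_sup; first by exists (Pform A x0), x0.
  move=> _ [x Hx <-].
  rewrite Pdec_nz //.
  pose u X := \sum_(k < #|X|) `|x (enum_val k)| `^ p.
  apply: le_trans (young_sum (a := fun X => lambdap p (psub A X)) (u := u) rpos rp _ _ _).
  + apply: ler_sum => X _; exact: homog.
  + by move=> X; apply: lam_ge0.
  + by move=> X; apply: sumr_ge0 => k _; exact: powR_ge0.
  + have := Hx; rewrite /= (norm_dec A (fun i => `|x i| `^ p)) => <-.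
    rewrite big_mkcondr /=; apply: ler_sum => X _.
    case: ifP => // _; apply: sumr_ge0 => k _; exact: powR_ge0.
-
  have [Teq|Tn] := eqVneq T 0.
    by rewrite Teq powR0 ?gt_eqF // lam_ge0.
  have Tpos : 0 < T by rewrite lt_def Tn T0.
  set K := \sum_(X in ccomps A | cnonzero (psub A X)) (1 : R).
  have K0 : 0 <= K by apply: sumr_ge0.
  apply/ler_addgt0Pr => eps eps0.
  pose eps' := eps / (K + 1).
  have K1 : 0 < K + 1 by rewrite ltr_wpDl.
  have eps'0 : 0 < eps' by rewrite divr_gt0.
  have Hch : forall X : {set 'I_n}, exists z : 'I_n -> R, X \in ccomps A ->
      sphn p (fun k : 'I_#|X| => z (enum_val k)) /\
      lambdap p (psub A X) - eps' < Pform (psub A X) (fun k => z (enum_val k)).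
    move=> X; case: (boolP (X \in ccomps A)) => HX; last by exists (fun=> 0).
    have [z Hz1 Hz2] := approx p0 eps'0 HX; by exists z.
  have [zf Hzf] := choice Hch.
  pose c X := if cnonzero (psub A X) then lambdap p (psub A X) `^ q / T else 0.
  have c0 : forall X, 0 <= c X.
    by move=> X; rewrite /c; case: ifP => // _; rewrite divr_ge0 // powR_ge0.
  have c1 : forall X, X \in ccomps A -> c X <= 1.
    move=> X HX; rewrite /c; case: ifP => nz //.
    rewrite ler_pdivrMr // mul1r /T (bigD1 X) /=; last by rewrite HX nz.
    rewrite lerDl; apply: sumr_ge0 => Y _; exact: powR_ge0.
  pose x i := c (comp A i) `^ p^-1 * zf (comp A i) i.
  have xE : forall X, X \in ccomps A ->
      (fun k : 'I_#|X| => x (enum_val k)) = (fun k => c X `^ p^-1 * zf X (enum_val k)).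
    by move=> X HX; apply/funext => k; rewrite /x -(comps_uniq HX (enum_valP k)).
  have Hx : sphn p x.
    rewrite /sphn (norm_dec A (fun i => `|x i| `^ p)).
    transitivity (\sum_(X in ccomps A) c X).
      apply: eq_bigr => X HX.
      rewrite (eq_bigr (fun k => `|c X `^ p^-1 * zf X (enum_val k)| `^ p)); last first.
        by move=> k _; rewrite /x -(comps_uniq HX (enum_valP k)).
      rewrite sph_scale ?powR_ge0 // -powRrM mulVf ?gt_eqF // powRr1 //.
      rewrite /c; case: ifP => nz; last by rewrite mul0r.
      by have [H1 _] := Hzf X HX; move: H1; rewrite /sphn /= => ->; rewrite mulr1.
    have -> : \sum_(X in ccomps A) c X =
        \sum_(X in ccomps A | cnonzero (psub A X)) lambdap p (psub A X) `^ q / T.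
      by rewrite big_mkcondr /=; apply: eq_bigr => X _; rewrite /c; case: ifP.
    by rewrite -mulr_suml -/T divff ?gt_eqF.
  have HP : \sum_(X in ccomps A | cnonzero (psub A X))
        c X `^ s * (lambdap p (psub A X) - eps') <= Pform A x.
    rewrite Pdec_nz //; apply: ler_sum => X /andP [HX nz].
    rewrite xE // Pform_scale -powR_mulrn ?powR_ge0 // -powRrM.
    rewrite (_ : p^-1 * r%:R = s); last by rewrite /s mulrC.
    apply: ler_wpM2l; first exact: powR_ge0.
    by have [_ H2] := Hzf X HX; exact: ltW H2.
  have Hsum : \sum_(X in ccomps A | cnonzero (psub A X))
        c X `^ s * lambdap p (psub A X) = T `^ e.
    transitivity (\sum_(X in ccomps A | cnonzero (psub A X))
        lambdap p (psub A X) `^ q / T `^ s).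
      apply: eq_bigr => X /andP [_ nz]; rewrite /c nz; apply: term_alg => //.
        exact: lam_ge0.
      by rewrite /q /s; field; rewrite !gt_eqF.
    rewrite -mulr_suml -/T -{1}(powRr1 T0) -powRB; last by rewrite Tn implybT.
    by congr (_ `^ _); rewrite /s /e; field; rewrite gt_eqF.
  have Hcs : \sum_(X in ccomps A | cnonzero (psub A X)) c X `^ s <= K.
    apply: ler_sum => X /andP [HX _].
    rewrite -(powR1' s); apply: ge0_ler_powR; rewrite ?nnegrE //.
      by rewrite ltW // divr_gt0.
    exact: c1.
  have H1 : T `^ e - eps' * K <= lambdap p A.
    apply: le_trans (lam_ge A p0 Hx); apply: le_trans HP.
    under eq_bigr do rewrite mulrBr.
    rewrite sumrB Hsum -mulr_suml.
    by apply: lerB => //; rewrite mulrC; apply: ler_wpM2l => //; exact: ltW.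
  have H2 : eps' * K <= eps.
    rewrite /eps' mulrAC ler_pdivrMr //; apply: ler_wpM2l; first exact: ltW.
    by rewrite lerDl.
  lra.
Qed.
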